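(* Let $\mathcal{H}$ be a complex linear space with a Hermitian sesquilinear form $[\cdot,\cdot]$, and suppose $\mathcal{H}=\operatorname{span}\{f_n\}_{n=1}^\infty$ (finite linear combinations), where $[f_n,f_m]=0$ for $n\neq m$, $[f_n,f_n]\neq 0$ for all $n$, and there exist indices $n,m$ with $[f_n,f_n]>0$ and $[f_m,f_m]<0$. Let $\mathcal{F}_{++}=\{f\in\mathcal{H}:[f,f]>0\}$. Let $W$ be the linear operator on $\mathcal{H}$ defined by $Wf_n=\mu_nf_n$, where $\mu_n\in\mathbb{C}$, $\mu_n\neq0$. Then the following are equivalent: (i) $W$ maps $\mathcal{F}_{++}$ onto $\mathcal{F}_{++}$ in a one-to-one manner; (ii) there exists $c>0$ such that $|\mu_n|=c$ for all $n\in\mathbb{N}$. *)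

(* Defs.v *)
From HB Require Import structures.
From mathcomp Require Import all_boot all_order all_algebra.
From mathcomp Require Import complex.
From mathcomp Require Import reals.
Set Implicit Arguments. Unset Strict Implicit. Unset Printing Implicit Defensive.
Import Order.TTheory GRing.Theory Num.Theory.
Local Open Scope ring_scope.

Definition hermitian_sesq (R : realType) (H : lmodType R[i])
    (B : H -> H -> R[i]) : Prop :=
  [/\ forall (a : R[i]) (x y z : H), B (a *: x + y) z = a * B x z + B y z,
      forall (a : R[i]) (x y z : H), B z (a *: x + y) = a^* * B z x + B z y
    & forall x y : H, B x y = (B y x)^* ].

Definition spans (R : realType) (H : lmodType R[i]) (f : nat -> H) : Prop :=
  forall h : H, exists (n : nat) (a : 'I_n -> R[i]),
    h = \sum_(k < n) a k *: f k.

Definition Fpp (R : realType) (H : lmodType R[i]) (B : H -> H -> R[i]) (x : H)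
  : Prop := 0 < B x x.

Definition bij_on_Fpp (R : realType) (H : lmodType R[i])
    (B : H -> H -> R[i]) (W : H -> H) : Prop :=
  [/\ forall x, Fpp B x -> Fpp B (W x),
      forall y, Fpp B y -> exists x, Fpp B x /\ W x = y
    & forall x y, Fpp B x -> Fpp B y -> W x = W y -> x = y].

(* Main.v *)
Require Import Defs.
From HB Require Import structures.
From mathcomp Require Import all_boot all_order all_algebra.
From mathcomp Require Import complex.
From mathcomp Require Import reals ring lra.
Import Order.TTheory GRing.Theory Num.Theory.
Local Open Scope ring_scope.
Lemma t1 (R : realType) (r : R) : (0 < (r%:C)%C) = (0 < r).
Proof. by rewrite ltcE /= eqxx. Qed.
Lemma t2 (R : realType) (z : R[i]) : 0 < z -> exists a, z = (a%:C)%C /\ 0 < a.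
Proof. case: z => a b; rewrite ltcE /= => /andP[/eqP -> h]; by exists a. Qed.
Lemma t3 (R : realType) (z : R[i]) : z < 0 -> exists a, z = (a%:C)%C /\ a < 0.
Proof. case: z => a b; rewrite ltcE /= => /andP[/eqP <- h]; by exists a. Qed.
Lemma t4 (R : realType) (u : R) : ((u%:C)%C)^* = (u%:C)%C.
Proof. by rewrite conj_Creal //; apply/complex_realP; exists u. Qed.

Theorem proposition2p5 (R : realType) (H : lmodType R[i])
    (B : H -> H -> R[i]) (f : nat -> H) (mu : nat -> R[i])
    (W : {linear H -> H}) :
  hermitian_sesq B ->
  spans f ->
  (forall n m : nat, n <> m -> B (f n) (f m) = 0) ->
  (forall n : nat, B (f n) (f n) != 0) ->
  (exists n : nat, 0 < B (f n) (f n)) ->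
  (exists m : nat, B (f m) (f m) < 0) ->
  (forall n : nat, mu n != 0) ->
  (forall n : nat, W (f n) = mu n *: f n) ->
  (bij_on_Fpp B W <-> exists c : R, 0 < c /\ forall n : nat, `|mu n| = (c%:C)%C).
Proof.
move=> [BlinL BlinR Bsym] Hspan Horth Hnz [p0 Hp0] [q0 Hq0] Hmu HW.
have B0l : forall z, B 0 z = 0.
  move=> z; have h := BlinL 1 0 0 z; rewrite scale1r addr0 mul1r in h.
  by apply: (addrI (B 0 z)); rewrite addr0 -h.
have BD : forall x y z, B (x + y) z = B x z + B y z.
  by move=> x y z; have := BlinL 1 x y z; rewrite scale1r mul1r.
have BZ : forall a x z, B (a *: x) z = a * B x z.
  by move=> a x z; have := BlinL a x 0 z; rewrite addr0 B0l addr0.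
have B0r : forall z, B z 0 = 0.
  move=> z; have h := BlinR 1 0 0 z; rewrite scale1r addr0 rmorph1 mul1r in h.
  by apply: (addrI (B z 0)); rewrite addr0 -h.
have BDr : forall x y z, B z (x + y) = B z x + B z y.
  by move=> x y z; have := BlinR 1 x y z; rewrite scale1r rmorph1 mul1r.
have BZr : forall a x z, B z (a *: x) = a^* * B z x.
  by move=> a x z; have := BlinR a x 0 z; rewrite addr0 B0r addr0.
have Bsum : forall n (d : 'I_n -> R[i]) z,
    B (\sum_(k < n) d k *: f k) z = \sum_(k < n) d k * B (f k) z.
  move=> n d z.
  rewrite (big_morph (fun x => B x z) (fun x y => BD x y z) (B0l z)).
  by apply: eq_bigr => k _; rewrite BZ.
have Bcoef : forall n (d : 'I_n -> R[i]) (j : 'I_n),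
    B (\sum_(k < n) d k *: f k) (f j) = d j * B (f j) (f j).
  move=> n d j; rewrite Bsum (bigD1 j) //= big1 ?addr0 //.
  move=> k kj; rewrite Horth ?mulr0 // => e; move: kj.
  by rewrite -(inj_eq val_inj) /= e eqxx.
have Bquad : forall n (d : 'I_n -> R[i]),
    B (\sum_(k < n) d k *: f k) (\sum_(k < n) d k *: f k)
    = \sum_(k < n) d k * (d k)^* * B (f k) (f k).
  move=> n d; rewrite Bsum; apply: eq_bigr => k _.
  by rewrite [B (f k) _]Bsym Bcoef rmorphM /= -(Bsym (f k) (f k)) mulrA.
have Wsum : forall n (d : 'I_n -> R[i]),
    W (\sum_(k < n) d k *: f k) = \sum_(k < n) (d k * mu k) *: f k.
  move=> n d; rewrite linear_sum; apply: eq_bigr => k _.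
  by rewrite linearZ /= HW scalerA.
have Winj : forall x, W x = 0 -> x = 0.
  move=> x; case: (Hspan x) => n [d ->]; rewrite Wsum => h.
  have dj : forall j, d j = 0.
    move=> j; have := Bcoef n (fun k => d k * mu k) j.
    rewrite h B0l => /esym/eqP; rewrite !mulf_eq0 (negbTE (Hmu j)) (negbTE (Hnz j)).
    by rewrite !orbF => /eqP.
  by rewrite big1 // => k _; rewrite dj scale0r.
have Winj2 : forall x y, W x = W y -> x = y.
  move=> x y e; apply/eqP; rewrite -subr_eq0; apply/eqP/Winj.
  by rewrite linearB /= e subrr.
split.
- move=> [Hin Hon _].
  have key : forall p q, 0 < B (f p) (f p) -> B (f q) (f q) < 0 -> `|mu p| = `|mu q|.
    move=> p q hp hq.
    have pq : p <> q by move=> e; move: hq; rewrite -e => hq; have := lt_trans hq hp; rewrite ltxx.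
    have G : forall s t : R[i], B (s *: f p + t *: f q) (s *: f p + t *: f q)
        = s * s^* * B (f p) (f p) + t * t^* * B (f q) (f q).
      move=> s t; rewrite !BD !BZ !BDr !BZr (Horth p q) // (Horth q p); last by move=> e; apply: pq.
      ring.
    have [a [ea a0]] := @t2 _ _ hp.
    have [b [eb b0]] := @t3 _ _ hq.
    have [P [eP P0]] : exists P, `|mu p| = (P%:C)%C /\ 0 < P.
      by apply: t2; rewrite normr_gt0.
    have [Q [eQ Q0]] : exists Q, `|mu q| = (Q%:C)%C /\ 0 < Q.
      by apply: t2; rewrite normr_gt0.
    rewrite eP eQ; congr (_%:C)%C.
    pose U := - (2 * b * Q ^+ 2); pose V := a * (P ^+ 2 + Q ^+ 2).
    have U0 : 0 <= U by rewrite /U; nra.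
    have V0 : 0 <= V by rewrite /V; nra.
    pose u := Num.sqrt U; pose v := Num.sqrt V.
    have uu : u * u = U by rewrite -expr2 sqr_sqrtr.
    have vv : v * v = V by rewrite -expr2 sqr_sqrtr.
    pose x := (u%:C)%C *: f p + (v%:C)%C *: f q.
    have Ex : B x x = ((U * a + V * b)%:C)%C.
      by rewrite G !t4 ea eb -uu -vv !rmorphD !rmorphM.
    have eWx : W x = ((u%:C)%C * mu p) *: f p + ((v%:C)%C * mu q) *: f q.
      by rewrite linearD !linearZ /= !HW !scalerA.
    have mp : mu p * (mu p)^* = ((P ^+ 2)%:C)%C by rewrite -normCK eP rmorphXn.
    have mq : mu q * (mu q)^* = ((Q ^+ 2)%:C)%C by rewrite -normCK eQ rmorphXn.
    have EWx : B (W x) (W x) = ((P ^+ 2 * U * a + Q ^+ 2 * V * b)%:C)%C.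
      rewrite eWx G !rmorphM /= !t4 ea eb.
      have hh : forall (w : R) (m : R[i]), (w%:C)%C * m * ((w%:C)%C * m^*) = (w%:C)%C * (w%:C)%C * (m * m^*).
        by move=> *; ring.
      rewrite !hh mp mq -uu -vv.
      rewrite !rmorphD !rmorphM; ring.
    have ab : a * b < 0 by rewrite pmulr_rlt0.
    have E1 : U * a + V * b = (a * b) * (P ^+ 2 - Q ^+ 2) by rewrite /U /V; ring.
    have E2 : P ^+ 2 * U * a + Q ^+ 2 * V * b = (a * b * Q ^+ 2) * (Q ^+ 2 - P ^+ 2).
      by rewrite /U /V; ring.
    have abQ : a * b * Q ^+ 2 < 0 by rewrite pmulr_llt0 // exprn_gt0.
    have [hlt|hgt|//] := ltgtP P Q.
    + have h2 : P ^+ 2 < Q ^+ 2 by rewrite !expr2; nra.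
      have hx : Fpp B x by rewrite /Fpp Ex t1 E1 nmulr_rgt0 // subr_lt0.
      have := Hin x hx; rewrite /Fpp EWx t1 E2 nmulr_rgt0 // subr_lt0 => h.
      by exfalso; move: h2; rewrite ltNge (ltW h).
    + have h2 : Q ^+ 2 < P ^+ 2 by rewrite !expr2; nra.
      have hy : Fpp B (W x) by rewrite /Fpp EWx t1 E2 nmulr_rgt0 // subr_lt0.
      have [x' [hx' ex']] := Hon _ hy.
      have := Winj2 _ _ ex'; move: hx' => /[swap] ->.
      rewrite /Fpp Ex t1 E1 nmulr_rgt0 // subr_lt0 => h.
      by exfalso; move: h2; rewrite ltNge (ltW h).
  have [c [ec c0]] : exists c, `|mu p0| = (c%:C)%C /\ 0 < c.
    by apply: t2; rewrite normr_gt0.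
  exists c; split => // n; rewrite -ec.
  have rn : B (f n) (f n) \is Num.real by apply/CrealP; rewrite -Bsym.
  have := Hnz n; rewrite real_neqr_lt ?real0 // => /orP[hn|hn].
  + by rewrite (key p0 n).
  + by rewrite (key n q0) // (key p0 q0).
- move=> [c [c0 hc]].
  have c2 : 0 < ((c ^+ 2)%:C)%C by rewrite t1 exprn_gt0.
  have quadW : forall x, B (W x) (W x) = ((c ^+ 2)%:C)%C * B x x.
    move=> x; case: (Hspan x) => n [d ->]; rewrite Wsum !Bquad mulr_sumr.
    apply: eq_bigr => k _.
    have hm : mu k * (mu k)^* = ((c ^+ 2)%:C)%C by rewrite -normCK hc rmorphXn.
    by rewrite rmorphM /= -hm; ring.
  split.
  + by move=> x; rewrite /Fpp quadW pmulr_rgt0.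
  + move=> y; case: (Hspan y) => n [d ey] Fy.
    have eW : W (\sum_(k < n) (d k / mu k) *: f k) = y.
      by rewrite Wsum ey; apply: eq_bigr => k _; rewrite divfK.
    exists (\sum_(k < n) (d k / mu k) *: f k); split => //.
    by move: Fy; rewrite /Fpp -eW quadW pmulr_rgt0.
  + by move=> x y _ _; apply: Winj2.
Qed.
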